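(* For every integer $m\ge13$, $\kappa_m\ge 0.5$.
   Context: $s(m)=m(\log m)^2$. For real $y>1$, $x>1$, $w_y(x)=1-\frac yx-\frac{y-1}{\log y}\frac{\log x}{x}$. $\kappa_m=\frac1m\sum_{p\le (m+1)/2,\ p\text{ prime}}\min_{0\le j\le m}\{\lfloor j/p\rfloor+\lfloor (m-j)/p\rfloor\}\frac{\log p}{p-1}w_p(s(m)e^{s(m)})$. *)

(* Defs.v *)
From Stdlib Require Import Reals.
From mathcomp Require Import all_boot.
Open Scope R_scope.

Definition s (m : nat) : R := INR m * (ln (INR m)) ^ 2.

Definition w (y x : R) : R := 1 - y / x - (y - 1) / ln y * (ln x / x).

(* min_{0 <= j <= m} (floor(j/p) + floor((m-j)/p)), for nat m, p.
   The neutral element m%/p is itself the j = 0 term, so it does not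
   change the minimum. *)
Definition minfloor (m p : nat) : nat :=
  \big[minn/(m %/ p)%N]_(j < m.+1) (j %/ p + (m - j) %/ p)%N.

Definition kappa_term (m p : nat) : R :=
  INR (minfloor m p) * (ln (INR p) / (INR p - 1)) * w (INR p) (s m * exp (s m)).

Definition kappa (m : nat) : R :=
  / INR m *
  foldr Rplus 0 [seq kappa_term m p | p <- iota 0 m.+2 & prime p && (p.*2 <= m.+1)%N].

(* Main.v *)
Require Import Defs.
From Stdlib Require Import Reals.
From mathcomp Require Import all_boot.
Open Scope R_scope.
From Stdlib Require Import Lra.
From mathcomp Require Import zify.

Lemma ln_mono x y : 0 < x -> x <= y -> ln x <= ln y.
Proof.
move=> hx hxy; case: (Rle_lt_or_eq_dec _ _ hxy) => h.
- by apply: Rlt_le; apply: ln_increasing.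
- by rewrite h; apply: Rle_refl.
Qed.

Lemma exp_mono x y : x <= y -> exp x <= exp y.
Proof.
move=> hxy; case: (Rle_lt_or_eq_dec _ _ hxy) => h.
- by apply: Rlt_le; apply: exp_increasing.
- by rewrite h; apply: Rle_refl.
Qed.

Lemma exp_nmul (n : nat) x : exp (INR n * x) = exp x ^ n.
Proof.
elim: n => [|n IH]; first by rewrite /= Rmult_0_l exp_0.
by rewrite S_INR Rmult_plus_distr_r Rmult_1_l exp_plus IH /= Rmult_comm.
Qed.

Lemma ln_lb (n : nat) (p a : R) : (0 < n)%N -> 0 < p -> 0 <= a <= INR n ->
  / p <= (1 - a / INR n) ^ n -> a <= ln p.
Proof.
move=> hn hp ha h.
have hN : 0 < INR n by apply: lt_0_INR; apply/ltP.
have e1 : exp (- a) = exp (- a / INR n) ^ n.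
  rewrite -exp_nmul; congr exp; field; lra.
have e2 : (1 - a / INR n) ^ n <= exp (- a / INR n) ^ n.
  apply: pow_incr; split.
  - have : a / INR n <= 1.
      apply (Rmult_le_reg_r (INR n)) => //.
      rewrite /Rdiv Rmult_assoc Rinv_l; lra.
    lra.
  - have := exp_ineq1_le (- a / INR n).
    have -> : - a / INR n = - (a / INR n) by rewrite /Rdiv Ropp_mult_distr_l.
    lra.
have h3 : / p <= exp (- a) by rewrite e1; lra.
have := ln_mono _ _ (Rinv_0_lt_compat _ hp) h3.
rewrite ln_exp ln_Rinv //; lra.
Qed.

Lemma ln2_lb : 692/1000 <= ln 2.
Proof.
apply: (ln_lb 256) => //; first lra.
all: rewrite INR_IZR_INZ /=; lra.
Qed.
Lemma ln3_lb : 1096/1000 <= ln 3.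
Proof.
apply: (ln_lb 256) => //; first lra.
all: rewrite INR_IZR_INZ /=; lra.
Qed.
Lemma ln5_lb : 1604/1000 <= ln 5.
Proof.
apply: (ln_lb 256) => //; first lra.
all: rewrite INR_IZR_INZ /=; lra.
Qed.
Lemma ln7_lb : 1938/1000 <= ln 7.
Proof.
apply: (ln_lb 256) => //; first lra.
all: rewrite INR_IZR_INZ /=; lra.
Qed.

Lemma minfloor_ge m p : (0 < p)%N -> ((m.+1 %/ p).-1 <= minfloor m p)%N.
Proof.
move=> hp; rewrite /minfloor.
apply: (big_ind (fun x => ((m.+1 %/ p).-1 <= x)%N)).
- have e1 := divn_eq m p. have r1 := ltn_pmod m hp.
  have : (m.+1 %/ p < m %/ p + 2)%N.
    rewrite ltn_divLR //.
    move: e1 r1; move: (m %/ p) (m %% p) => q1 s1 e1 r1. rewrite mulnDl. nia.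
  move: (m %/ p) (m.+1 %/ p) => a b. lia.
- by move=> x y hx hy; rewrite leq_min hx hy.
- move=> [j hj] _ /=.
  have e1 := divn_eq j p. have e2 := divn_eq (m - j) p.
  have r1 := ltn_pmod j hp. have r2 := ltn_pmod (m - j) hp.
  have : (m.+1 %/ p < j %/ p + (m - j) %/ p + 2)%N.
    rewrite ltn_divLR //.
    move: e1 e2 r1 r2; move: (j %/ p) (j %% p) ((m - j) %/ p) ((m - j) %% p) => q1 s1 q2 s2.
    move=> e1 e2 r1 r2. rewrite !mulnDl. nia.
  move: (j %/ p + (m - j) %/ p)%N (m.+1 %/ p) => a b. lia.
Qed.

Definition dl : R := 1 / 10000.

Lemma w_bound m y : (13 <= m)%N -> 2 <= y -> y <= INR m ->
  1 - dl <= w y (s m * exp (s m)).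
Proof.
move=> hm hy hyM.
set M := INR m.
rewrite -/M in hyM.
have hM : 13 <= M.
  have := le_INR 13 m (elimT leP hm). rewrite /M INR_IZR_INZ /=. lra.
have hlnM : 2 <= ln M.
  have e2 : exp 2 <= 9.
    have -> : (2 = 1 + 1) by lra.
    rewrite exp_plus. have := exp_le_3. have := exp_pos 1. nra.
  have := ln_mono (exp 2) M (exp_pos 2) ltac:(lra). rewrite ln_exp. lra.
set S := s m.
have hS : 4 * M <= S.
  rewrite /S /s -/M. have h4 : 4 <= ln M ^ 2 by rewrite /=; nra.
  have : 0 <= M by lra. nra.
set E := exp S.
have hE : 50000 * M <= E.
  have h1 : exp (4 * M) <= E by apply: exp_mono.
  have h2 : exp (4 * M) = exp (M / 2) ^ 8.
    rewrite -exp_nmul; congr exp. rewrite INR_IZR_INZ /=. lra.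
  have h3 : (1 + M / 2) ^ 8 <= exp (M / 2) ^ 8.
    apply: pow_incr. have := exp_ineq1_le (M / 2). lra.
  have h4 : (75/10) ^ 7 <= (1 + M / 2) ^ 7.
    apply: pow_incr. lra.
  have h5 : (1 + M / 2) ^ 8 = (1 + M / 2) ^ 7 * (1 + M / 2) by rewrite /=; ring.
  nra.
have Epos : 0 < E by apply: exp_pos.
have Spos : 1 <= S by lra.
set u := / E.
have upos : 0 < u by apply: Rinv_0_lt_compat.
have hMu : M * u <= 1 / 50000.
  have : u <= / (50000 * M) by apply: Rinv_le_contravar => //; lra.
  have -> : / (50000 * M) = 1 / 50000 * / M by field; lra.
  move=> h. have hMp : 0 < M by lra.
  have : M * u <= M * (1 / 50000 * / M) by apply: Rmult_le_compat_l; lra.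
  have -> : M * (1 / 50000 * / M) = 1 / 50000 by field; lra.
  done.
have iS : / S <= 1.
  have := Rinv_le_contravar 1 S ltac:(lra) Spos. rewrite Rinv_1. done.
have iSpos : 0 < / S by apply: Rinv_0_lt_compat; lra.
have hlnX : ln (S * E) = ln S + S.
  rewrite ln_mult; first by rewrite /E ln_exp.
  all: try lra.
have hlnS : ln S <= S.
  have := exp_ineq1_le (ln S). rewrite exp_ln; lra.
have hlnS0 : 0 <= ln S.
  have := ln_mono 1 S ltac:(lra) Spos. rewrite ln_1. done.
have t1 : y / (S * E) <= M * u.
  rewrite /Rdiv Rinv_mult -/u.
  have : y * (/ S * u) <= y * u.
    apply: Rmult_le_compat_l; first lra.
    have := Rmult_le_compat_r u _ _ (Rlt_le _ _ upos) iS. lra.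
  have := Rmult_le_compat_r u _ _ (Rlt_le _ _ upos) hyM. rewrite -/M. lra.
have t2 : ln (S * E) / (S * E) <= 2 * u.
  rewrite hlnX /Rdiv Rinv_mult -/u.
  have : (ln S + S) * (/ S * u) <= (2 * S) * (/ S * u).
    apply: Rmult_le_compat_r; nra.
  have -> : 2 * S * (/ S * u) = 2 * u by field; lra.
  lra.
have t0 : 0 <= ln (S * E) / (S * E).
  rewrite hlnX /Rdiv Rinv_mult -/u. apply: Rmult_le_pos; first lra.
  apply: Rmult_le_pos; lra.
have hlny : / 2 <= ln y.
  have := ln_lt_2. have := ln_mono 2 y ltac:(lra) hy. lra.
have t3 : (y - 1) / ln y <= 2 * M.
  have : / ln y <= 2.
    have := Rinv_le_contravar (/2) (ln y) ltac:(lra) hlny. rewrite Rinv_inv. done.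
  move=> h. rewrite /Rdiv.
  have := Rmult_le_compat_l (y - 1) _ _ ltac:(lra) h. lra.
have t4 : 0 <= (y - 1) / ln y.
  have : 0 < / ln y by apply: Rinv_0_lt_compat; lra.
  rewrite /Rdiv. move=> h. apply: Rmult_le_pos; lra.
rewrite /w /dl.
have : (y - 1) / ln y * (ln (S * E) / (S * E)) <= 2 * M * (2 * u).
  apply: Rmult_le_compat => //.
lra.
Qed.

Lemma term_lb m p a : (13 <= m)%N -> prime p -> (p.*2 <= m.+1)%N ->
  0 <= a -> a <= ln (INR p) ->
  INR ((m.+1 %/ p).-1) * (a / (INR p - 1)) * (1 - dl) <= kappa_term m p.
Proof.
move=> hm hp h2 ha hla.
have p2 : (2 <= p)%N by apply: prime_gt1.
have pm : (p <= m)%N by lia.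
have hP : 2 <= INR p.
  have := le_INR 2 p (elimT leP p2). by rewrite /=; lra.
have hPm : INR p <= INR m by apply: le_INR; apply/leP.
have hw := w_bound m (INR p) hm hP hPm.
rewrite /kappa_term.
have hk : INR ((m.+1 %/ p).-1) <= INR (minfloor m p).
  apply: le_INR; apply/leP; apply: minfloor_ge; lia.
have hk0 : 0 <= INR ((m.+1 %/ p).-1) by apply: pos_INR.
have hq : a / (INR p - 1) <= ln (INR p) / (INR p - 1).
  rewrite /Rdiv; apply: Rmult_le_compat_r => //.
  apply: Rlt_le; apply: Rinv_0_lt_compat; lra.
have hq0 : 0 <= a / (INR p - 1).
  rewrite /Rdiv; apply: Rmult_le_pos => //.
  apply: Rlt_le; apply: Rinv_0_lt_compat; lra.
apply: Rmult_le_compat => //.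
- by apply: Rmult_le_pos.
- rewrite /dl; lra.
- by apply: Rmult_le_compat.
Qed.

Lemma term_nonneg m p : (13 <= m)%N -> prime p -> (p.*2 <= m.+1)%N ->
  0 <= kappa_term m p.
Proof.
move=> hm hp h2.
have p2 : (2 <= p)%N by apply: prime_gt1.
have hP : 2 <= INR p.
  have := le_INR 2 p (elimT leP p2). by rewrite /=; lra.
have := term_lb m p 0 hm hp h2 (Rle_refl 0).
have : 0 <= ln (INR p).
  have := ln_mono 1 (INR p) ltac:(lra) ltac:(lra). by rewrite ln_1.
move=> h1 h. have := h h1. rewrite /Rdiv Rmult_0_l Rmult_0_r Rmult_0_l. done.
Qed.

Lemma rest_nonneg m l : (13 <= m)%N ->
  all (fun p => prime p && (p.*2 <= m.+1)%N) l ->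
  0 <= foldr Rplus 0 [seq kappa_term m p | p <- l].
Proof.
move=> hm; elim: l => [|p l IH] /=; first lra.
move=> /andP[/andP[hp h2] hl].
have := term_nonneg m p hm hp h2. have := IH hl. lra.
Qed.

Lemma split_list m : (13 <= m)%N ->
  [seq p <- iota 0 m.+2 | prime p && (p.*2 <= m.+1)%N] =
  [:: 2; 3; 5; 7]%N ++ [seq p <- iota 8 (m - 6) | prime p && (p.*2 <= m.+1)%N].
Proof.
move=> hm.
have -> : m.+2 = (8 + (m - 6))%N by lia.
rewrite iotaD filter_cat; congr (_ ++ _).
rewrite (@eq_in_filter _ _ prime); first by [].
move=> x; rewrite mem_iota => /andP[_ hx].
case: (prime x) => //=. apply/idP. lia.
Qed.

Lemma kappa_lb m : (13 <= m)%N ->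
  kappa m >= / INR m * (kappa_term m 2 + kappa_term m 3 + kappa_term m 5 + kappa_term m 7).
Proof.
move=> hm.
rewrite /kappa split_list // map_cat foldr_cat /=.
have := rest_nonneg m [seq p <- iota 8 (m - 6) | prime p && (p.*2 <= m.+1)%N] hm (filter_all _ _).
set R0 := foldr _ _ _ => hR.
apply: Rle_ge; apply: Rmult_le_compat_l.
- apply: Rlt_le; apply: Rinv_0_lt_compat; apply: lt_0_INR; apply/ltP; lia.
- lra.
Qed.

Lemma k_lb m p : (0 < p)%N -> (m + 2 <= p * (m.+1 %/ p).-1 + 2 * p)%N.
Proof.
move=> hp.
have e1 := divn_eq m.+1 p. have r1 := ltn_pmod m.+1 hp.
move: e1 r1; move: (m.+1 %/ p) (m.+1 %% p) => q r e1 r1.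
case: q e1 => [|q] e1 /=; nia.
Qed.

Lemma term_lb' m p a c : (13 <= m)%N -> prime p -> (p.*2 <= m.+1)%N ->
  0 <= a -> a <= ln (IZR (Z.of_nat p)) -> c = a / (IZR (Z.of_nat p) - 1) * (1 - 1/10000) ->
  INR ((m.+1 %/ p).-1) * c <= kappa_term m p /\
  INR m + 2 <= IZR (Z.of_nat p) * INR ((m.+1 %/ p).-1) + 2 * IZR (Z.of_nat p).
Proof.
move=> hm hp h2 ha hla ->; split.
- have := term_lb m p a hm hp h2 ha. rewrite INR_IZR_INZ => h.
  have := h hla. rewrite /dl. lra.
- have := le_INR _ _ (elimT leP (k_lb m p (prime_gt0 hp))).
  rewrite !plus_INR !mult_INR !(INR_IZR_INZ p) /=. lra.
Qed.

Theorem lemma6p5 : forall m : nat, (13 <= m)%N -> kappa m >= 1 / 2.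
Proof.
move=> m hm.
have K := kappa_lb m hm.
have [T2 N2] := term_lb' m 2 (692/1000) (692/1000 / 1 * (1 - 1/10000)) hm isT
  ltac:(lia) ltac:(lra) ln2_lb ltac:(simpl; lra).
have [T3 N3] := term_lb' m 3 (1096/1000) (1096/1000 / 2 * (1 - 1/10000)) hm isT
  ltac:(lia) ltac:(lra) ln3_lb ltac:(simpl; lra).
have [T5 N5] := term_lb' m 5 (1604/1000) (1604/1000 / 4 * (1 - 1/10000)) hm isT
  ltac:(lia) ltac:(lra) ln5_lb ltac:(simpl; lra).
have [T7 N7] := term_lb' m 7 (1938/1000) (1938/1000 / 6 * (1 - 1/10000)) hm isT
  ltac:(lia) ltac:(lra) ln7_lb ltac:(simpl; lra).
simpl in N2, N3, N5, N7.
have hM : 0 < INR m by apply: lt_0_INR; apply/ltP; lia.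
suff hS : INR m / 2 <= kappa_term m 2 + kappa_term m 3 + kappa_term m 5 + kappa_term m 7.
  apply: Rle_ge; move/Rge_le: K => K; apply: Rle_trans K.
  have -> : 1 / 2 = / INR m * (INR m / 2) by field; lra.
  apply: Rmult_le_compat_l => //; apply: Rlt_le; apply: Rinv_0_lt_compat => //.
have [hbig|hsmall] : (20 <= m)%N \/ (m <= 19)%N by lia.
- have : 20 <= INR m.
    have := le_INR 20 m (elimT leP hbig). rewrite INR_IZR_INZ /=. done.
  lra.
- have : m \in iota 13 7 by rewrite mem_iota; lia.
  rewrite !inE => H.
  do 6 (case/orP: H => [/eqP E|H]; [subst m; simpl in T2, T3, T5, T7 |- *; lra|]).
  move/eqP: H => E; subst m; simpl in T2, T3, T5, T7 |- *; lra.
Qed.
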